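(* Every Steiner triple system on $27$ points of $3$-rank at most $24$ is resolvable.
   Context: A Steiner triple system $STS(v)$ is a pair $(\mathcal{P},\mathcal{B})$ with $|\mathcal{P}|=v$ and $\mathcal{B}$ a set of $3$-subsets (blocks) such that every $2$-subset of $\mathcal{P}$ lies in exactly one block. Its $3$-rank is the rank over $\mathbb{F}_3$ of its block–point incidence matrix. A parallel class is a set of blocks partitioning $\mathcal{P}$; the system is resolvable if $\mathcal{B}$ can be partitioned into parallel classes. *)

(* Defs.v *)
From HB Require Import structures.
From mathcomp Require Import all_boot all_order all_algebra.
Set Implicit Arguments. Unset Strict Implicit. Unset Printing Implicit Defensive.

Definition is_STS (T : finType) (B : {set {set T}}) : Prop :=
  (forall b, b \in B -> #|b| = 3) /\
  (forall x y : T, x != y -> exists! b, b \in B /\ x \in b /\ y \in b).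

Definition incidence_mx (F : fieldType) (T : finType) (B : {set {set T}})
  : 'M[F]_(#|B|, #|T|) :=
  \matrix_(i < #|B|, j < #|T|)
     (if (enum_val j : T) \in (enum_val i : {set T}) then 1%R else 0%R).

Definition p_rank (p : nat) (T : finType) (B : {set {set T}}) : nat :=
  \rank (incidence_mx 'F_p B).

Definition parallel_class (T : finType) (C : {set {set T}}) : bool :=
  partition C [set: T].

Definition resolvable (T : finType) (B : {set {set T}}) : Prop :=
  exists P : {set {set {set T}}},
    partition P B /\ (forall C, C \in P -> parallel_class C).

(* Main.v *)
Require Import Defs.
From HB Require Import structures.
From mathcomp Require Import all_boot all_order all_algebra.
From mathcomp Require Import zify.

Module Part_P2.
Set Implicit Arguments. Unset Strict Implicit. Unset Printing Implicit Defensive.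
Import GRing.Theory.

Lemma cards3 (T : finType) (x y z : T) : x != y -> x != z -> y != z ->
  #|[set x; y; z]| = 3.
Proof.
move=> xy xz yz; rewrite -setUA cardsU1 cards2 !inE negb_or xy xz yz.
by [].
Qed.

Section Basic.
Variable T : finType.
Variable B : {set {set T}}.
Hypothesis B3 : forall b, b \in B -> #|b| = 3.
Hypothesis Buniq : forall x y : T, x != y -> exists! b, b \in B /\ x \in b /\ y \in b.

Definition blk (x y : T) : {set T} := odflt set0 [pick b in B | (x \in b) && (y \in b)].

Lemma blkP x y : x != y -> [/\ blk x y \in B, x \in blk x y & y \in blk x y].
Proof.
move=> xy; rewrite /blk; case: pickP => [b /andP[Hb /andP[Hx Hy]] | H] //=.
have [b [[Hb [Hx Hy]] _]] := Buniq xy.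
by move: (H b); rewrite Hb Hx Hy.
Qed.

Lemma blk_uniq x y b : x != y -> b \in B -> x \in b -> y \in b -> b = blk x y.
Proof.
move=> xy Hb Hx Hy; have [b0 [_ Hu]] := Buniq xy.
have [H1 H2 H3] := blkP xy.
by rewrite -(Hu b (conj Hb (conj Hx Hy))) (Hu _ (conj H1 (conj H2 H3))).
Qed.

Lemma blkC x y : x != y -> blk x y = blk y x.
Proof.
move=> xy; have [H1 H2 H3] := blkP xy.
by apply: blk_uniq => //; rewrite eq_sym.
Qed.

Definition third (x y : T) : T := odflt x [pick z in blk x y | (z != x) && (z != y)].

Lemma thirdP x y : x != y ->
  [/\ third x y != x, third x y != y & blk x y = [set x; y; third x y]].
Proof.
move=> xy; have [H1 H2 H3] := blkP xy.
rewrite /third; case: pickP => [z /andP[Hz /andP[zx zy]] | H] /=.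
  split => //; apply/eqP; rewrite eq_sym eqEcard.
  rewrite (cards3 xy) ?(eq_sym x) ?(eq_sym y) // B3 // leqnn andbT.
  by apply/subsetP => w; rewrite !inE => /orP[/orP[]|] /eqP ->.
have : blk x y \subset [set x; y].
  apply/subsetP => z Hz; move: (H z); rewrite Hz !inE /=.
  by move/negbT; rewrite negb_and !negbK.
by move/subset_leq_card; rewrite B3 // cards2 xy.
Qed.

Lemma third_in x y : x != y -> third x y \in blk x y.
Proof. by move=> xy; have [_ _ ->] := thirdP xy; rewrite !inE eqxx !orbT. Qed.

Lemma blk_mem x y z : x != y -> z \in blk x y -> [|| z == x, z == y | z == third x y].
Proof. by move=> xy; have [_ _ ->] := thirdP xy; rewrite !inE -orbA. Qed.

Lemma third_uniq x y b z : x != y -> b \in B -> x \in b -> y \in b -> z \in b ->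
  z != x -> z != y -> z = third x y.
Proof.
move=> xy Hb Hx Hy Hz zx zy; move: Hz; rewrite (blk_uniq xy Hb Hx Hy).
by move/(blk_mem xy); rewrite (negbTE zx) (negbTE zy) => /eqP.
Qed.

Lemma thirdC x y : x != y -> third x y = third y x.
Proof.
move=> xy; have [t1 t2 _] := thirdP xy; have [H1 H2 H3] := blkP xy.
apply: (third_uniq (y:=x) (b := blk x y)) => //; first by rewrite eq_sym.
exact: third_in.
Qed.

Lemma thirdK x y : x != y -> third x (third x y) = y.
Proof.
move=> xy; have [t1 t2 _] := thirdP xy; have [H1 H2 H3] := blkP xy.
symmetry; apply: (third_uniq (b := blk x y)) => //; first by rewrite eq_sym.
- exact: third_in.
- by rewrite eq_sym.
- by rewrite eq_sym.
Qed.

End Basic.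

End Part_P2.
Import Part_P2.
Module Part_P3.
Set Implicit Arguments. Unset Strict Implicit. Unset Printing Implicit Defensive.
Import GRing.Theory.
Local Open Scope ring_scope.

Definition l3 : seq 'F_3 := [:: 0; 1; 2].
Lemma mem_l3 (x : 'F_3) : x \in l3.
Proof. case: x => [[|[|[|x]]] Hx] //; rewrite !inE -!val_eqE //. Qed.
Lemma F3_all (P : 'F_3 -> bool) : all P l3 -> forall x, P x.
Proof. by move/allP => H x; apply: H; apply: mem_l3. Qed.

Lemma F3_all2 (P : 'F_3 -> 'F_3 -> bool) :
  all (fun a => all (P a) l3) l3 -> forall x y, P x y.
Proof. by move/allP => H x; apply: F3_all; apply: H; apply: mem_l3. Qed.
Lemma F3_all3 (P : 'F_3 -> 'F_3 -> 'F_3 -> bool) :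
  all (fun a => all (fun b => all (P a b) l3) l3) l3 -> forall x y z, P x y z.
Proof. by move/allP => H x; apply: F3_all2; apply: H; apply: mem_l3. Qed.

Lemma F3_double (a : 'F_3) : - (a + a) = a.
Proof. by apply/eqP; move: a; apply: F3_all; vm_compute. Qed.
Lemma F3_ne (a b : 'F_3) : a != b -> - (a + b) != a.
Proof. by apply/implyP; move: a b; apply: F3_all2; vm_compute. Qed.
Lemma F3_cover (a b c : 'F_3) : a != b -> [|| c == a, c == b | c == - (a + b)].
Proof. by apply/implyP; move: a b c; apply: F3_all3; vm_compute. Qed.

Lemma sum3 (T : finType) (h : T -> 'F_3) x y z : x != y -> x != z -> y != z ->
  \sum_(w in [set x; y; z]) h w = h x + h y + h z.
Proof.
move=> xy xz yz; rewrite -setUA big_setU1 /=; last by rewrite !inE negb_or xy xz.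
by rewrite big_setU1 /= ?big_set1 ?addrA // inE.
Qed.

Section Level.
Variable T : finType.
Variable B : {set {set T}}.
Hypothesis B3 : forall b, b \in B -> #|b| = 3%N.
Hypothesis Buniq : forall x y : T, x != y -> exists! b, b \in B /\ x \in b /\ y \in b.
Hypothesis HT : #|T| = 27%N.

Definition Sz (h : T -> 'F_3) := forall b, b \in B -> \sum_(z in b) h z = 0.

Lemma S_third h x y : Sz h -> x != y -> h (third B x y) = - (h x + h y).
Proof.
move=> Sh xy; have [t1 t2 E] := thirdP B3 Buniq xy.
have [Hb _ _] := blkP Buniq xy.
have n1 : x != third B x y by rewrite eq_sym.
have n2 : y != third B x y by rewrite eq_sym.
have := Sh _ Hb; rewrite E sum3 // => /eqP.
by rewrite addrC addr_eq0 => /eqP.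
Qed.

Lemma level9 h : Sz h -> (exists x y, h x != h y) -> forall c, #|[set x | h x == c]| = 9%N.
Proof.
move=> Sh [x1 [y1 H1]].
have Hall : forall c, exists x, h x = c.
  move=> c; have := F3_cover c H1; case/or3P => /eqP ->.
  - by exists x1.
  - by exists y1.
  have xy : x1 != y1 by apply: contraNneq H1 => ->.
  by exists (third B x1 y1); rewrite S_third.
have Hle : forall a a', a != a' -> (#|[set x | h x == a]| <= #|[set x | h x == a']|)%N.
  move=> a a' aa; have [x0 Hx0] := Hall (- (a + a')).
  have Hne : forall y, h y == a -> y != x0.
    move=> y /eqP Hy; apply: contraNneq (F3_ne aa) => E.
    by rewrite -Hx0 -E Hy.
  rewrite -(@card_in_imset _ _ (third B x0)).
    apply: subset_leq_card; apply/subsetP => z /imsetP [y]; rewrite inE => Hy ->.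
    rewrite inE S_third //; last by rewrite eq_sym Hne.
    by rewrite Hx0 (eqP Hy) opprD opprK addrC addKr.
  move=> y y'; rewrite !inE => Hy Hy' E.
  rewrite -(thirdK B3 Buniq (x := x0) (y := y)); last by rewrite eq_sym Hne.
  by rewrite E thirdK // eq_sym Hne.
have Heq : forall a a', #|[set x | h x == a]| = #|[set x | h x == a']|.
  move=> a a'; case: (eqVneq a a') => [-> // | aa].
  by apply/eqP; rewrite eqn_leq !Hle // eq_sym.
have Hsum : #|T| = (\sum_(c : 'F_3) #|[set x | h x == c]|)%N.
  rewrite -sum1_card (partition_big h predT) //=.
  by apply: eq_bigr => c _; rewrite -sum1_card; apply: eq_bigl => x; rewrite inE.
move=> c; move: Hsum; rewrite HT (eq_bigr (fun _ => #|[set x | h x == c]|)); last first.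
  by move=> a _; apply: Heq.
by rewrite sum_nat_const card_Fp //; lia.
Qed.

End Level.

End Part_P3.
Import Part_P3.
Module Part_P4a.
Set Implicit Arguments. Unset Strict Implicit. Unset Printing Implicit Defensive.
Import GRing.Theory.
Local Open Scope ring_scope.

Notation V := ('F_3 * 'F_3)%type.
Definition lV : seq V := [seq (a, b) | a <- l3, b <- l3].
Lemma mem_lV (v : V) : v \in lV.
Proof. by case: v => a b; apply/allpairsP; exists (a, b); rewrite !mem_l3. Qed.
Lemma V_all (P : V -> bool) : all P lV -> forall x, P x.
Proof. by move/allP => H x; apply: H; apply: mem_lV. Qed.
Lemma V_all2 (P : V -> V -> bool) : all (fun a => all (P a) lV) lV -> forall x y, P x y.
Proof. by move/allP => H x; apply: V_all; apply: H; apply: mem_lV. Qed.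
Lemma V_all3 (P : V -> V -> V -> bool) :
  all (fun a => all (fun b => all (P a b) lV) lV) lV -> forall x y z, P x y z.
Proof. by move/allP => H x; apply: V_all2; apply: H; apply: mem_lV. Qed.
Lemma I4_all (P : nat -> bool) : all P (iota 0 4) -> forall k : 'I_4, P k.
Proof. by move/allP => H k; apply: H; rewrite mem_iota /=; case: k. Qed.

Definition coef (k : nat) : V :=
  match k with 0 => (1, 0) | 1 => (0, 1) | 2 => (1, 1) | _ => (1, 2) end.
Definition elln (k : nat) (v : V) : 'F_3 := (coef k).1 * v.1 + (coef k).2 * v.2.
Definition ell (k : 'I_4) (v : V) : 'F_3 := elln k v.
Definition vneg (a b : V) : V := (- (a.1 + b.1), - (a.2 + b.2)).

Lemma coef_nz (k : 'I_4) : ((coef k).1 != 0) || ((coef k).2 != 0).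
Proof.
have H : all (fun k => ((coef k).1 != 0) || ((coef k).2 != 0)) (iota 0 4) by vm_compute.
have Hk : nat_of_ord k \in iota 0 4 by case: k => i Hi; rewrite mem_iota.
exact: (allP H _ Hk).
Qed.

Lemma ell_vneg k a b : ell k (vneg a b) = - (ell k a + ell k b).
Proof.
rewrite /ell /elln /vneg /=; rewrite !mulrN !mulrDr !opprD.
by rewrite -!addrA; congr (_ + _); rewrite addrC -!addrA; congr (_ + _); rewrite addrC.
Qed.

Lemma vneg_same a : vneg a a = a.
Proof. by case: a => a1 a2; rewrite /vneg /= !F3_double. Qed.

Lemma vneg_ne a b : a != b -> vneg a b != a.
Proof. by apply/implyP; move: a b; apply: V_all2; vm_compute. Qed.

Lemma vnegC a b : vneg a b = vneg b a.
Proof. by rewrite /vneg addrC [_.2 + _]addrC. Qed.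

Lemma vnegK a b : vneg a (vneg a b) = b.
Proof. by case: a b => a1 a2 [b1 b2]; rewrite /vneg /= !opprD !opprK !addKr. Qed.

Lemma V_type_ex a b : a != b -> exists k : 'I_4, ell k a = ell k b.
Proof.
move=> ab.
have H : has (fun k => elln k a == elln k b) (iota 0 4).
  by move: ab; apply/implyP; move: a b; apply: V_all2; vm_compute.
move/hasP: H => [k Hk /eqP E]; rewrite mem_iota /= in Hk.
by exists (Ordinal Hk).
Qed.

Lemma V_type_uniq (k k' : 'I_4) a b : a != b -> ell k a = ell k b -> ell k' a = ell k' b -> k = k'.
Proof.
move=> ab E E'; apply/val_inj => /=; move: E E'; rewrite /ell.
have H : all (fun k1 => all (fun k2 => all (fun a => all (fun b =>
   (a != b) ==> (elln k1 a == elln k1 b) ==> (elln k2 a == elln k2 b) ==> (k1 == k2)) lV) lV)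
   (iota 0 4)) (iota 0 4) by vm_compute.
have Hk : forall k : 'I_4, nat_of_ord k \in iota 0 4 by move=> [i Hi]; rewrite mem_iota.
move/allP: H => /(_ _ (Hk k)) /allP /(_ _ (Hk k')) /allP /(_ a (mem_lV a)) /allP /(_ b (mem_lV b)).
by rewrite ab /= => H E E'; move: H; rewrite E E' !eqxx /= => /eqP.
Qed.

Lemma I4P (P : nat -> Prop) : P 0%N -> P 1%N -> P 2%N -> P 3%N -> forall k : 'I_4, P k.
Proof. by move=> H0 H1 H2 H3 [[|[|[|[|k]]]] Hk]. Qed.

Lemma V_line (k : 'I_4) a b v : ell k a = ell k b -> ell k a = ell k v -> a != b ->
  [|| v == a, v == b | v == vneg a b].
Proof.
move=> E1 E2 ab; move: E1 E2; rewrite /ell => E1 E2.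
suff H : forall a b v, (elln k a == elln k b) ==> (elln k a == elln k v) ==> (a != b) ==>
   [|| v == a, v == b | v == vneg a b].
  by have := H a b v; rewrite -E2 -E1 ab !eqxx.
clear; move: k; apply: (I4P (P := fun k => forall a b v, (elln k a == elln k b) ==>
   (elln k a == elln k v) ==> (a != b) ==> [|| v == a, v == b | v == vneg a b]));
  apply: V_all3; vm_compute; reflexivity.
Qed.

Lemma V_other (k : 'I_4) a : exists v, v != a /\ ell k v = ell k a.
Proof.
rewrite /ell; suff : has (fun v => (v != a) && (elln k v == elln k a)) lV.
  by case/hasP => v _ /andP[H1 /eqP H2]; exists v.
move: a; apply: (I4P (P := fun k => forall a, has (fun v => (v != a) && (elln k v == elln k a)) lV));
  apply: V_all; vm_compute; reflexivity.
Qed.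

Lemma V_count (v p : V) :
  ((elln 0 v == elln 0 p) + (elln 1 v == elln 1 p) + (elln 2 v == elln 2 p) + (elln 3 v == elln 3 p)
   = 1 + 3 * (v == p))%N.
Proof.
apply/eqP; move: v p; apply: V_all2; vm_compute; reflexivity.
Qed.

End Part_P4a.
Import Part_P4a.
Module Part_P4b.
Set Implicit Arguments. Unset Strict Implicit. Unset Printing Implicit Defensive.
Import GRing.Theory.
Local Open Scope ring_scope.

Lemma sumb (T : finType) (P : pred T) : (\sum_(x : T) (P x : nat))%N = #|[set x | P x]|.
Proof.
rewrite -sum1_card [RHS]big_mkcond /=; apply: eq_bigr => x _; rewrite inE.
by case: (P x).
Qed.

Section Main.
Variable T : finType.
Variable B : {set {set T}}.
Hypothesis B3 : forall b, b \in B -> #|b| = 3%N.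
Hypothesis Buniq : forall x y : T, x != y -> exists! b, b \in B /\ x \in b /\ y \in b.
Hypothesis HT : #|T| = 27%N.
Variables f g : T -> 'F_3.
Hypothesis Sf : Sz B f.
Hypothesis Sg : Sz B g.
Hypothesis Hnc : forall a c : 'F_3, (a != 0) || (c != 0) ->
        exists x y, a * f x + c * g x != a * f y + c * g y.
Variable x0 : T.

Definition phi (x : T) : V := (f x, g x).

Lemma phi_third x y : x != y -> phi (third B x y) = vneg (phi x) (phi y).
Proof. by move=> xy; rewrite /phi /vneg /= !(S_third B3 Buniq) //. Qed.

Lemma lev9 (k : 'I_4) c : #|[set x | ell k (phi x) == c]| = 9%N.
Proof.
apply: (level9 B3 Buniq HT).
  move=> b Hb; rewrite /ell /elln /phi /=.
  rewrite big_split /= -!mulr_sumr Sf // Sg //.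
  by rewrite !mulr0 addr0.
have [x [y H]] := Hnc (coef_nz k).
by exists x, y.
Qed.

Lemma fib3 (p : V) : #|[set x | phi x == p]| = 3%N.
Proof.
have E : (\sum_(x : T) ((elln 0 (phi x) == elln 0 p) + (elln 1 (phi x) == elln 1 p)
     + (elln 2 (phi x) == elln 2 p) + (elln 3 (phi x) == elln 3 p)))%N
   = (\sum_(x : T) (1 + 3 * (phi x == p)))%N.
  by apply: eq_bigr => x _; rewrite V_count.
rewrite !big_split /= in E.
have := lev9 (@Ordinal 4 0 isT) (elln 0 p); rewrite /ell /= => E0.
have := lev9 (@Ordinal 4 1 isT) (elln 1 p); rewrite /ell /= => E1.
have := lev9 (@Ordinal 4 2 isT) (elln 2 p); rewrite /ell /= => E2.
have := lev9 (@Ordinal 4 3 isT) (elln 3 p); rewrite /ell /= => E3.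
move: E; rewrite !sumb E0 E1 E2 E3 big1_eq sum1_card cardT -cardT HT; lia.
Qed.


Definition isfib (b : {set T}) := [forall x in b, forall y in b, phi x == phi y].
Definition fibre (x : T) := [set y | phi y == phi x].
Definition line (k : 'I_4) (c : 'F_3) := [set x | ell k (phi x) == c].
Definition DL k c := [set b in B | (b \subset line k c) && ~~ isfib b].

Lemma phi_ne x y : phi x != phi y -> x != y.
Proof. by apply: contraNneq => ->. Qed.

Lemma fibre_card x : #|fibre x| = 3%N.
Proof. exact: fib3 (phi x). Qed.

Lemma fibre_blk x : fibre x \in B.
Proof.
have : (1 < #|fibre x :\ x|)%N.
  move: (cardsD1 x (fibre x)); rewrite fibre_card inE eqxx /=; lia.
case/card_gt1P => y [z [Hy Hz yz]].
move: Hy; rewrite !inE => /andP[yx /eqP Ey].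
have xy : x != y by rewrite eq_sym.
have [Hb Hx Hy'] := blkP Buniq xy.
have -> : fibre x = blk B x y; last by [].
apply/eqP; rewrite eq_sym eqEcard (B3 Hb) fibre_card leqnn andbT.
apply/subsetP => w /(blk_mem B3 Buniq xy) /or3P[] /eqP ->; rewrite inE //.
  by rewrite Ey.
by rewrite phi_third // Ey vneg_same.
Qed.

Lemma fibre_isfib x : isfib (fibre x).
Proof.
apply/forallP => y; apply/implyP; rewrite inE => /eqP Hy; apply/forallP => z.
by apply/implyP; rewrite inE => /eqP ->; rewrite Hy.
Qed.

Lemma isfib_sub b x : isfib b -> x \in b -> b \subset fibre x.
Proof.
move=> /forallP H Hx; apply/subsetP => y Hy; rewrite inE.
by move: (H y); rewrite Hy /= => /forallP /(_ x); rewrite Hx.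
Qed.

Lemma nf_pair b : ~~ isfib b -> exists x y, [/\ x \in b, y \in b & phi x != phi y].
Proof.
rewrite negb_forall => /existsP [x]; rewrite negb_imply negb_forall => /andP[Hx /existsP[y]].
by rewrite negb_imply => /andP[Hy H]; exists x, y.
Qed.

Lemma nf_inj b x y : b \in B -> ~~ isfib b -> x \in b -> y \in b -> phi x = phi y -> x = y.
Proof.
move=> Hb Hnf Hx Hy E; apply/eqP; apply/negPn/negP => xy.
move/negP: Hnf; apply.
rewrite (blk_uniq Buniq xy Hb Hx Hy).
apply/forallP => u; apply/implyP => /(blk_mem B3 Buniq xy) Hu.
apply/forallP => v; apply/implyP => /(blk_mem B3 Buniq xy) Hv.
have Et : phi (third B x y) = phi x by rewrite phi_third // -E vneg_same.
by move/or3P: Hu => [] /eqP ->; move/or3P: Hv => [] /eqP ->; rewrite ?Et ?E.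
Qed.

Lemma blk_DL k x y : phi x != phi y -> ell k (phi x) = ell k (phi y) ->
  blk B x y \in DL k (ell k (phi x)).
Proof.
move=> Hp E; have xy := phi_ne Hp.
have [Hb Hx Hy] := blkP Buniq xy.
rewrite inE Hb /=; apply/andP; split.
  apply/subsetP => w /(blk_mem B3 Buniq xy) /or3P[] /eqP ->; rewrite inE //.
    by rewrite E.
  by rewrite phi_third // ell_vneg -E F3_double.
apply/negP => /forallP /(_ x); rewrite Hx /= => /forallP /(_ y); rewrite Hy /=.
by apply/negP.
Qed.

Lemma DL_B k c b : b \in DL k c -> b \in B.
Proof. by rewrite inE => /andP[]. Qed.
Lemma DL_nf k c b : b \in DL k c -> ~~ isfib b.
Proof. by rewrite inE => /and3P[]. Qed.
Lemma DL_line k c b x : b \in DL k c -> x \in b -> ell k (phi x) = c.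
Proof. by rewrite inE => /and3P[_ /subsetP H _] /H; rewrite inE => /eqP. Qed.

Lemma DL_cover k c b v : b \in DL k c -> ell k v = c -> exists y, y \in b /\ phi y = v.
Proof.
move=> Hb Hv; have [x [y [Hx Hy Hp]]] := nf_pair (DL_nf Hb).
have xy := phi_ne Hp.
have Ex := DL_line Hb Hx; have Ey := DL_line Hb Hy.
have := V_line (a := phi x) (b := phi y) (v := v) (k := k).
rewrite Ex Ey Hv => /(_ erefl erefl Hp) /or3P[] /eqP ->.
- by exists x.
- by exists y.
exists (third B x y); split; last by rewrite phi_third.
rewrite (blk_uniq Buniq xy (DL_B Hb) Hx Hy); exact: third_in.
Qed.

Lemma relabel k c b x : b \in DL k c -> ell k (phi x) = c ->
  exists u v, [/\ phi u != phi v, b = blk B u v & phi x = phi (third B u v)].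
Proof.
move=> Hb Hx; have [u0 [v0 [Hu Hv Hp]]] := nf_pair (DL_nf Hb).
have uv := phi_ne Hp; have HbB := DL_B Hb.
have Eb := blk_uniq Buniq uv HbB Hu Hv.
have Hw : third B u0 v0 \in b by rewrite Eb third_in.
have [t1 t2 _] := thirdP B3 Buniq uv.
have Pw : phi (third B u0 v0) = vneg (phi u0) (phi v0) by rewrite phi_third.
have := V_line (k := k) (a := phi u0) (b := phi v0) (v := phi x).
rewrite (DL_line Hb Hu) (DL_line Hb Hv) Hx => /(_ erefl erefl Hp) /or3P[] /eqP E.
- exists v0, (third B u0 v0); split.
  + by rewrite Pw vnegC eq_sym vneg_ne // eq_sym.
  + by apply: blk_uniq => //; rewrite eq_sym.
  + rewrite E; congr phi; apply: (third_uniq B3 Buniq (b := b)) => //; first by rewrite eq_sym.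
    by rewrite eq_sym.
- exists u0, (third B u0 v0); split.
  + by rewrite Pw eq_sym vneg_ne.
  + by apply: blk_uniq => //; rewrite eq_sym.
  + rewrite E; congr phi; apply: (third_uniq B3 Buniq (b := b)) => //; by rewrite eq_sym.
- by exists u0, v0; split => //; rewrite E Pw.
Qed.

Section Local.
Variables (u v x : T).
Hypothesis uv : phi u != phi v.
Hypothesis xnb : x \notin blk B u v.
Hypothesis xw : phi x = phi (third B u v).

Lemma xu_ne y : phi y = phi u -> x != y.
Proof.
move=> Hy; apply: phi_ne; rewrite Hy xw phi_third ?(phi_ne uv) //.
by rewrite vneg_ne.
Qed.

Lemma m_phi y : phi y = phi u -> phi (third B x y) = phi v.
Proof.
move=> Hy; rewrite phi_third ?xu_ne // xw phi_third ?(phi_ne uv) // Hy.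
by rewrite vnegC vnegK.
Qed.

Lemma mu_ne : third B x u != v.
Proof.
apply/negP => /eqP E.
have xu : x != u by apply: xu_ne.
have [H1 H2 H3] := blkP Buniq xu.
have Hv : v \in blk B x u by rewrite -E third_in.
move: xnb; rewrite -(blk_uniq Buniq (phi_ne uv) H1 H3 Hv).
by rewrite H2.
Qed.

Lemma A_ex : exists y, [/\ phi y = phi u, y != u & third B x y != v].
Proof.
have : #|fibre u :\ u| == 2%N.
  by move: (cardsD1 u (fibre u)); rewrite fibre_card inE eqxx /=; lia.
case/cards2P => y1 [y2 [y12 E]].
have : y1 \in fibre u :\ u by rewrite E !inE eqxx.
have : y2 \in fibre u :\ u by rewrite E !inE eqxx orbT.
rewrite !inE => /andP[n2 /eqP P2] /andP[n1 /eqP P1].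
case: (eqVneq (third B x y1) v) => [E1|N1]; last by exists y1.
case: (eqVneq (third B x y2) v) => [E2|N2]; last by exists y2.
move: y12; rewrite -(thirdK B3 Buniq (xu_ne P1)) E1 -E2 thirdK ?eqxx //.
exact: xu_ne.
Qed.

Lemma A_uniq y1 y2 : phi y1 = phi u -> y1 != u -> third B x y1 != v ->
  phi y2 = phi u -> y2 != u -> third B x y2 != v -> y1 = y2.
Proof.
move=> P1 n1 m1 P2 n2 m2; apply/eqP/negPn/negP => y12.
have S3 : #|[set u; y1; y2]| = 3%N by rewrite cards3 // eq_sym.
have Hin : {in [set u; y1; y2] &, injective (third B x)}.
  move=> a a'; rewrite !inE => Ha Ha' E.
  have Pa : phi a = phi u by move: Ha => /orP[/orP[]|] /eqP ->.
  have Pa' : phi a' = phi u by move: Ha' => /orP[/orP[]|] /eqP ->.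
  by rewrite -(thirdK B3 Buniq (xu_ne Pa)) E thirdK // xu_ne.
have := subset_leq_card (A := [set third B x a | a in [set u; y1; y2]]) (B := fibre v :\ v).
rewrite card_in_imset // S3.
have -> : #|fibre v :\ v| = 2%N.
  by move: (cardsD1 v (fibre v)); rewrite fibre_card inE eqxx /=; lia.
suff Hs : [set third B x a | a in [set u; y1; y2]] \subset fibre v :\ v by move/(_ Hs).
apply/subsetP => z /imsetP[a Ha ->].
have Pa : phi a = phi u by move: Ha; rewrite !inE => /orP[/orP[]|] /eqP ->.
rewrite !inE m_phi // eqxx andbT.
by move: Ha; rewrite !inE => /orP[/orP[]|] /eqP ->; rewrite ?mu_ne.
Qed.

End Local.

Definition sim (b b' : {set T}) := (b == b') || [disjoint b & b'].

Lemma local_ex k c b x : b \in DL k c -> ell k (phi x) = c ->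
  exists b', [/\ b' \in DL k c, x \in b' & sim b b'].
Proof.
move=> Hb Hx; case: (boolP (x \in b)) => xb.
  by exists b; split => //; rewrite /sim eqxx.
have [u [v [uv Eb xw]]] := relabel Hb Hx.
rewrite Eb in Hb xb *.
have [y [Py yu my]] := A_ex uv xb xw.
have xy := xu_ne uv xw Py.
have Hu : u \in blk B u v by have [] := blkP Buniq (phi_ne uv).
have Hv : v \in blk B u v by have [] := blkP Buniq (phi_ne uv).
have Hnf := DL_nf Hb; have HB := DL_B Hb.
exists (blk B x y); split.
- rewrite -Hx; apply: blk_DL.
    by rewrite Py xw phi_third ?(phi_ne uv) // vneg_ne.
  by rewrite Py (DL_line Hb Hu).
- by have [] := blkP Buniq xy.
- apply/orP; right; rewrite disjoint_sym disjoint_subset.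
  apply/subsetP => z /(blk_mem B3 Buniq xy) /or3P[] /eqP ->; rewrite inE.
  + by [].
  + apply/negP => yb; move/negP: yu; apply; apply/eqP.
    exact: (nf_inj HB Hnf yb Hu Py).
  + apply/negP => mb; move/negP: my; apply; apply/eqP.
    exact: (nf_inj HB Hnf mb Hv (m_phi uv xw Py)).
Qed.

Lemma local_uniq k c b x b1 b2 : b \in DL k c -> b1 \in DL k c -> b2 \in DL k c ->
  x \in b1 -> x \in b2 -> sim b b1 -> sim b b2 -> b1 = b2.
Proof.
move=> Hb H1 H2 X1 X2 S1 S2.
case: (boolP (x \in b)) => xb.
  move: S1 S2; rewrite /sim.
  case/orP => [/eqP <- | D1]; last by move: (disjointFr D1 xb); rewrite X1.
  case/orP => [/eqP <- // | D2]; by move: (disjointFr D2 xb); rewrite X2.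
have Hx := DL_line H1 X1.
have [u [v [uv Eb xw]]] := relabel Hb Hx.
rewrite Eb in Hb xb S1 S2.
have Hu : u \in blk B u v by have [] := blkP Buniq (phi_ne uv).
have Hv : v \in blk B u v by have [] := blkP Buniq (phi_ne uv).
have Hc : ell k (phi u) = c by apply: (DL_line Hb Hu).
suff getA : forall b1, b1 \in DL k c -> x \in b1 -> sim (blk B u v) b1 ->
   exists y, [/\ b1 = blk B x y, phi y = phi u, y != u & third B x y != v].
  have [y1 [E1 P1 n1 m1]] := getA _ H1 X1 S1.
  have [y2 [E2 P2 n2 m2]] := getA _ H2 X2 S2.
  by rewrite E1 E2 (A_uniq uv xb xw P1 n1 m1 P2 n2 m2).
move=> b' H' X' S'.
have D : [disjoint blk B u v & b'].
  move: S'; rewrite /sim => /orP[/eqP E|//].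
  by move: xb; rewrite E X'.
have [y [Y Py]] := DL_cover H' Hc.
have xy := xu_ne uv xw Py.
have Eb' := blk_uniq Buniq xy (DL_B H') X' Y.
exists y; split => //.
- by apply/negP => /eqP E; move: (disjointFr D Hu); rewrite -E Y.
- apply/negP => /eqP E; move: (disjointFr D Hv); rewrite -E Eb' third_in //.
Qed.

Lemma sim_sym b b' : sim b b' = sim b' b.
Proof. by rewrite /sim eq_sym disjoint_sym. Qed.

Lemma sim_trans k c b1 b2 b3 : b1 \in DL k c -> b2 \in DL k c -> b3 \in DL k c ->
  sim b1 b2 -> sim b2 b3 -> sim b1 b3.
Proof.
move=> H1 H2 H3 S12 S23.
case: (eqVneq b1 b3) => [-> | n13]; first by rewrite /sim eqxx.
apply/orP; right; rewrite disjoint_subset; apply/subsetP => z Z1; rewrite inE.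
apply/negP => Z3; move/eqP: n13; apply.
by apply: (local_uniq H2 H1 H3 Z1 Z3); rewrite // sim_sym.
Qed.

Definition rp k c := odflt x0 [pick x in line k c].
Lemma rp_line k c : ell k (phi (rp k c)) = c.
Proof.
rewrite /rp; case: pickP => [x | H] /=; first by rewrite inE => /eqP.
have := lev9 k c; rewrite -/(line k c).
by rewrite (eq_card0 H).
Qed.

Definition Rs k c := [set b in DL k c | rp k c \in b].

Lemma Rs_card k c : #|Rs k c| = 3%N.
Proof.
set r := rp k c.
have [v [vr Ev]] := V_other k (phi r).
have Er := rp_line k c.
have -> : Rs k c = [set blk B r y | y in [set y | phi y == v]].
  apply/setP => b; rewrite inE; apply/andP/imsetP.
    move=> [Hb Hr]; have [y [Y Py]] := DL_cover Hb (etrans Ev Er).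
    exists y; first by rewrite inE Py.
    apply: blk_uniq => //; first by apply: phi_ne; rewrite Py eq_sym.
    exact: DL_B Hb.
  move=> [y]; rewrite inE => /eqP Py ->.
  have ry : phi r != phi y by rewrite Py eq_sym.
  split; last by have [] := blkP Buniq (phi_ne ry).
  by rewrite -[in DL k c]Er; apply: blk_DL => //; rewrite Py Ev.
rewrite card_in_imset; first by apply: fib3.
move=> y y'; rewrite !inE => /eqP Py /eqP Py' E.
have ry : phi r != phi y by rewrite Py eq_sym.
have ry' : phi r != phi y' by rewrite Py' eq_sym.
have Hd := blk_DL (k := k) ry; rewrite Py Ev in Hd.
have [H1 _ H3] := blkP Buniq (phi_ne ry).
have [_ _ H3'] := blkP Buniq (phi_ne ry').
apply: (nf_inj (b := blk B r y)) => //.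
- exact: (DL_nf (Hd erefl)).
- by rewrite E.
- by rewrite Py Py'.
Qed.

Definition key k c b := odflt set0 [pick b'' in Rs k c | sim b b''].
Definition idx k c b := index (key k c b) (enum (Rs k c)).

Lemma key_spec k c b : b \in DL k c -> key k c b \in Rs k c /\ sim b (key k c b).
Proof.
move=> Hb; rewrite /key; case: pickP => [b'' /andP[H1 H2] | H] //=.
have [b' [H1 H2 H3]] := local_ex Hb (rp_line k c).
by move: (H b'); rewrite inE H1 H2 H3.
Qed.

Lemma key_uniq k c b r : b \in DL k c -> r \in Rs k c -> sim b r -> key k c b = r.
Proof.
move=> Hb; rewrite inE => /andP[Hr Rr] S.
have [K1 K2] := key_spec Hb; move: K1; rewrite inE => /andP[K1 K3].
exact: (local_uniq Hb K1 Hr K3 Rr K2 S).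
Qed.

Lemma key_sim k c b1 b2 : b1 \in DL k c -> b2 \in DL k c ->
  key k c b1 = key k c b2 -> sim b1 b2.
Proof.
move=> H1 H2 E.
have [K1 S1] := key_spec H1; have [K2 S2] := key_spec H2.
have KD : key k c b1 \in DL k c by move: K1; rewrite inE => /andP[].
apply: (sim_trans H1 KD H2) => //; rewrite E sim_sym //.
Qed.

Definition rep (b : {set T}) := odflt x0 [pick x in b].
Definition typ b := [pick k : 'I_4 | b \in DL k (ell k (phi (rep b)))].
Definition bcol b : option ('I_4 * nat) :=
  if typ b is Some k then Some (k, idx k (ell k (phi (rep b))) b) else None.

Lemma rep_in b : b \in B -> rep b \in b.
Proof.
move=> Hb; rewrite /rep; case: pickP => [x //|H].
by move: (B3 Hb); rewrite (eq_card0 H).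
Qed.

Lemma col_DL k c b : b \in DL k c -> bcol b = Some (k, idx k c b).
Proof.
move=> Hb; have Hr := rep_in (DL_B Hb).
have Ec := DL_line Hb Hr.
rewrite /bcol /typ; case: pickP => [k' Hk' | H].
  have [x [y [Hx Hy Hp]]] := nf_pair (DL_nf Hb).
  have E1 := DL_line Hb Hx; have E2 := DL_line Hb Hy.
  have E1' := DL_line Hk' Hx; have E2' := DL_line Hk' Hy.
  have kk : k' = k by apply: (V_type_uniq Hp); rewrite ?E1 ?E2 ?E1' ?E2'.
  by subst k'; rewrite Ec.
by move: (H k); rewrite Ec Hb.
Qed.

Lemma col_Some b x k i : b \in B -> x \in b -> bcol b = Some (k, i) ->
  b \in DL k (ell k (phi x)) /\ idx k (ell k (phi x)) b = i.
Proof.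
move=> Hb Hx; rewrite /bcol /typ; case: pickP => [k' Hk' | //] [Ek Ei]; subst k' i.
by rewrite (DL_line Hk' Hx).
Qed.

Lemma col_None b : b \in B -> bcol b = None -> isfib b.
Proof.
move=> Hb Hc; apply/negPn/negP => Hnf.
have [x [y [Hx Hy Hp]]] := nf_pair Hnf.
have [k Ek] := V_type_ex Hp.
have := blk_DL Hp Ek; rewrite -(blk_uniq Buniq (phi_ne Hp) Hb Hx Hy) => HD.
by rewrite (col_DL HD) in Hc.
Qed.

Lemma col_fib b : isfib b -> bcol b = None.
Proof.
move=> Hf; rewrite /bcol /typ; case: pickP => [k Hk | //].
by move: (DL_nf Hk); rewrite Hf.
Qed.

Lemma coloring b : b \in B -> forall x, exists! b', b' \in B /\ x \in b' /\ bcol b' = bcol b.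
Proof.
move=> Hb x.
case Hc : (bcol b) => [[k i] | ].
  have [Hd Hi] := col_Some Hb (rep_in Hb) Hc.
  set c0 := ell k (phi (rep b)) in Hd Hi.
  set c := ell k (phi x).
  have [K1 _] := key_spec Hd.
  have Hsz : forall c', size (enum (Rs k c')) = 3%N by move=> c'; rewrite -cardE Rs_card.
  have Hi3 : (i < 3)%N by rewrite -Hi -(Hsz c0) index_mem mem_enum.
  set r := nth set0 (enum (Rs k c)) i.
  have Rr : r \in Rs k c by rewrite -mem_enum mem_nth // Hsz.
  have RD : r \in DL k c by move: Rr; rewrite inE => /andP[].
  have [b' [H1 H2 H3]] := local_ex RD (erefl c).
  exists b'; split.
    split; first exact: DL_B H1.
    split => //; rewrite (col_DL H1) /idx (key_uniq H1 Rr); last by rewrite sim_sym.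
    by rewrite index_uniq ?enum_uniq // Hsz.
  move=> b1 [B1 [X1 C1]].
  have [D1 I1] := col_Some B1 X1 C1.
  have E : key k c b1 = key k c b'.
    have [Ka _] := key_spec D1; have [Kb _] := key_spec H1.
    apply: (index_inj set0 (s := enum (Rs k c))); rewrite ?mem_enum //.
    rewrite -/(idx k c b1) I1 /idx (key_uniq H1 Rr); last by rewrite sim_sym.
    by rewrite index_uniq ?enum_uniq // Hsz.
  have := key_sim D1 H1 E; rewrite /sim => /orP[/eqP -> // | D].
  by move: (disjointFr D X1); rewrite H2.
have Hf := col_None Hb Hc.
exists (fibre x); split.
  split; first exact: fibre_blk.
  by split; [rewrite inE | apply: col_fib; apply: fibre_isfib].
move=> b1 [B1 [X1 C1]].
have F1 := col_None B1 C1.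
apply/eqP; rewrite eq_sym eqEcard (isfib_sub F1 X1) (B3 B1) fibre_card.
by [].
Qed.

End Main.

End Part_P4b.
Import Part_P4b.
Module Part_P5.
Set Implicit Arguments. Unset Strict Implicit. Unset Printing Implicit Defensive.

Lemma color_res (T : finType) (B : {set {set T}}) (C : eqType) (col : {set T} -> C) :
  (forall b, b \in B -> #|b| = 3) ->
  (forall b, b \in B -> forall x, exists! b', b' \in B /\ x \in b' /\ col b' = col b) ->
  resolvable B.
Proof.
move=> B3 Hcol.
pose cls b := [set b' in B | col b' == col b].
exists (cls @: B); split.
- apply/and3P; split.
  + apply/eqP/setP => b; apply/bigcupP/idP => [[Cl /imsetP [b0 Hb0 ->]] | Hb].
      by rewrite inE => /andP[].
    by exists (cls b); [apply/imsetP; exists b | rewrite inE Hb eqxx].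
  + apply/trivIsetP => A1 A2 /imsetP[b1 Hb1 ->] /imsetP[b2 Hb2 ->] Hne.
    rewrite -setI_eq0; apply/eqP/setP => b; rewrite !inE.
    apply/negP => /andP[/andP[Hb /eqP E1] /andP[_ /eqP E2]].
    move/eqP: Hne; apply; apply/setP => b'; rewrite !inE -E1 -E2 //.
  + apply/imsetP => [[b Hb E]].
    have : b \in cls b by rewrite inE Hb eqxx.
    by rewrite -E inE.
- move=> Cl /imsetP[b Hb ->].
  apply/and3P; split.
  + apply/eqP/setP => x; rewrite inE; apply/bigcupP.
    have [b' [[Hb' [Hx Hc]] _]] := Hcol b Hb x.
    by exists b' => //; rewrite inE Hb' Hc eqxx.
  + apply/trivIsetP => A1 A2; rewrite !inE => /andP[H1 /eqP E1] /andP[H2 /eqP E2] Hne.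
    rewrite -setI_eq0; apply/eqP/setP => x; rewrite !inE.
    apply/negP => /andP[X1 X2].
    have [b' [_ Hu]] := Hcol b Hb x.
    move/eqP: Hne; apply.
    by rewrite -(Hu A1 (conj H1 (conj X1 E1))) (Hu A2 (conj H2 (conj X2 E2))).
  + rewrite inE; apply/negP => /andP[H0 _].
    by move: (B3 _ H0); rewrite cards0.
Qed.

End Part_P5.
Import Part_P5.
Module Part_P1.
Set Implicit Arguments. Unset Strict Implicit. Unset Printing Implicit Defensive.
Import GRing.Theory.
Local Open Scope ring_scope.

Lemma lin_part (T : finType) (B : {set {set T}}) : #|T| = 27%N -> (p_rank 3 B <= 24)%N ->
  exists f g : T -> 'F_3, (forall b, b \in B -> \sum_(x in b) f x = 0) /\
    (forall b, b \in B -> \sum_(x in b) g x = 0) /\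
    (forall a c : 'F_3, (a != 0) || (c != 0) ->
        exists x y, a * f x + c * g x != a * f y + c * g y).
Proof.
move=> HT Hr.
set M := incidence_mx 'F_3 B.
pose K := kermx M^T.
have rK : (3 <= \rank K)%N.
  rewrite mxrank_ker mxrank_tr; move: Hr; rewrite /p_rank -/M; lia.
pose one : 'rV['F_3]_#|T| := const_mx 1.
have r1 : (\rank one <= 1)%N by apply: rank_leq_row.
have [u1 [Hu1 Nu1]] : exists u1 : 'rV_#|T|, (u1 <= K)%MS /\ ~~ (u1 <= one)%MS.
  case: (pickP (fun i => ~~ (row i K <= one)%MS)) => [i Hi | H].
    by exists (row i K); split => //; apply: row_sub.
  have : (K <= one)%MS by apply/row_subP => i; move: (H i) => /negbFE.
  move/mxrankS => H2; have := leq_trans H2 r1; by move/(leq_trans rK).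
pose W := (one + u1)%MS.
have rW : (\rank W <= 2)%N.
  apply: leq_trans (mxrank_adds_leqif _ _) _.
  by apply: (leq_add r1); apply: rank_leq_row.
have [u2 [Hu2 Nu2]] : exists u2 : 'rV_#|T|, (u2 <= K)%MS /\ ~~ (u2 <= W)%MS.
  case: (pickP (fun i => ~~ (row i K <= W)%MS)) => [i Hi | H].
    by exists (row i K); split => //; apply: row_sub.
  have : (K <= W)%MS by apply/row_subP => i; move: (H i) => /negbFE.
  move/mxrankS => H2; have := leq_trans H2 rW; by move/(leq_trans rK).
have Sum : forall u : 'rV_#|T|, (u <= K)%MS -> forall b, b \in B ->
    \sum_(x in b) u 0 (enum_rank x) = 0.
  move=> u Hu b Hb.
  have := congr1 (fun A : 'rV_#|B| => A 0 (enum_rank_in Hb b)) (sub_kermxP Hu).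
  rewrite !mxE => E; apply: (etrans _ E); rewrite big_mkcond /=.
  rewrite (reindex (@enum_val T T)); last by apply: onW_bij; apply: enum_val_bij.
apply: eq_bigr => j _; rewrite !mxE enum_valK enum_rankK_in //.
  by case: ifP => _; rewrite ?mulr1 ?mulr0.
exists (fun x => u1 0 (enum_rank x)), (fun x => u2 0 (enum_rank x)).
split; first exact: Sum.
split; first exact: Sum.
move=> a c Hac.
case: (boolP [exists x, exists y, a * u1 0 (enum_rank x) + c * u2 0 (enum_rank x)
     != a * u1 0 (enum_rank y) + c * u2 0 (enum_rank y)]).
  by move/existsP => [x /existsP [y H]]; exists x, y.
move=> Hn; exfalso.
have [x0 _] : exists x0 : T, x0 \in T by apply/card_gt0P; rewrite HT.
set k := a * u1 0 (enum_rank x0) + c * u2 0 (enum_rank x0).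
have E : a *: u1 + c *: u2 = k *: one.
  apply/rowP => j; rewrite !mxE mulr1.
  have := Hn; rewrite negb_exists => /forallP /(_ (enum_val j)).
  rewrite negb_exists => /forallP /(_ x0) /negbNE /eqP.
  by rewrite enum_valK.
case: (eqVneq c 0) => Hc.
  move: Hac; rewrite Hc eqxx orbF => Ha.
  move: E; rewrite Hc scale0r addr0 => E.
  have : u1 = (a^-1 * k) *: one by rewrite -scalerA -E scalerA mulVf // scale1r.
  move=> E1; move: Nu1; rewrite E1 scalemx_sub //.
have : u2 = c^-1 *: (k *: one - a *: u1).
  by rewrite -E addrC addKr scalerA mulVf // scale1r.
move=> E2; move: Nu2; rewrite E2 scalemx_sub //.
apply: addmx_sub; first by apply: scalemx_sub; apply: addsmxSl.
by rewrite -scaleNr; apply: scalemx_sub; apply: addsmxSr.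
Qed.

End Part_P1.
Import Part_P1.

Unset Implicit Arguments.

Theorem proposition3p3 (T : finType) (B : {set {set T}}) :
  #|T| = 27 -> is_STS B -> (p_rank 3 B <= 24)%N -> resolvable B.
Proof.
move=> HT [B3 Buniq] Hr.
have [f [g [Sf [Sg Hnc]]]] := lin_part HT Hr.
have [x0 _] : exists x0 : T, x0 \in T by apply/card_gt0P; rewrite HT.
apply: (color_res (col := bcol B f g x0)) => //.
exact: (coloring B3 Buniq HT Sf Sg Hnc).
Qed.
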